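(* In the hierarchical partition construction described in the context, let $v,v^*\in V$ be distinct points and let $j$ be a level such that $\mathcal S_{j+1}$ exists. Let $v\in S_1\in\mathcal S_j$, $v\in S_2\in\mathcal S_{j+1}$, $v^*\in S_1^*\in\mathcal S_j$, $v^*\in S_2^*\in\mathcal S_{j+1}$, and suppose that $S_2$ knows $S_2^*$ (at level $j+1$) but $S_1$ does not know $S_1^*$ (at level $j$). Then $$r_j\le d(v,v^* )<\Big(1+\frac{4\tau 2^{-\eta}}{\tau-1}\Big)\tau r_j .$$ In particular, for $\tau=2$ and $\eta=2$, $r_j\le d(v,v^* )\le 6r_j$.
   Context: Let $(V,d)$ be a finite metric space with $|V|\ge 2$ which is doubling with constant $\lambda$: for every $v\in V$ and $r>0$ the open ball $B_{2r}(v)=\{u:d(u,v)<2r\}$ is contained in the union of at most $\lambda$ open balls $B_r(w)$, $w\in V$. Fix an integer $\eta\ge2$ and a real $\tau$ with $1+\frac{1}{2^{\eta-1}-1}\le\tau\le 2^{\eta}$. For $L\subseteq V$ and $r>0$, a greedy partition of $L$ with parameter $r$ is obtained by: set $L_0=L$; while $L_i\ne\emptyset$ choose any $v_i\in L_i$, let $P_i=\{u\in L_i: d(u,v_i)<2^{-\eta-1}r\}$ with leader $v_i$, and set $L_{i+1}=L_i\setminus P_i$. Hierarchical partition construction: choose $r_0$ with $0<r_0<\min_{u\ne v}d(u,v)$ and put $r_j=\tau^j r_0$. Let $\mathcal S_0=\{\{v\}:v\in V\}$, the leader of $\{v\}$ being $v$. While $\mathcal S_j$ has more than one element: let $L_j$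 be the set of leaders of the sets in $\mathcal S_j$, let $\mathcal S'_{j+1}$ be a greedy partition of $L_j$ with parameter $2r_{j+1}$, and let $\mathcal S_{j+1}$ consist, for each $P\in\mathcal S'_{j+1}$, of the set $\bigcup\{S\in\mathcal S_j:\mathrm{leader}(S)\in P\}$, whose leader is defined to be the leader of $P$. Each $\mathcal S_j$ is a partition of $V$. For $S,S'\in\mathcal S_j$, $S$ knows $S'$ (at level $j$) if there are $v\in S$, $u\in S'$ with $d(v,u)<r_j$. *)

(* Defs.v *)
From HB Require Import structures.
From mathcomp Require Import all_boot all_order all_algebra.
Set Implicit Arguments. Unset Strict Implicit. Unset Printing Implicit Defensive.
Import Order.TTheory GRing.Theory Num.Theory.
Local Open Scope ring_scope.

Section Defs.
Variables (R : realFieldType) (V : finType) (d : V -> V -> R).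

Definition metric : Prop :=
  [/\ forall x y, 0 <= d x y,
      forall x y, d x y = 0 <-> x = y,
      forall x y, d x y = d y x
    & forall x y z, d x z <= d x y + d y z].

Definition ball (v : V) (r : R) : {set V} := [set u | d u v < r].

Definition doubling (lam : nat) : Prop :=
  forall (v : V) (r : R), 0 < r ->
    exists W : {set V}, (#|W| <= lam)%N /\
      ball v (2 * r) \subset \bigcup_(w in W) ball w r.

(* Greedy partition of L with parameter r, run along the sequence of chosen
   leaders ls. *)
Fixpoint greedy (eta : nat) (r : R) (L : {set V}) (ls : seq V)
  : option (seq ({set V} * V)) :=
  match ls with
  | [::] => if L == set0 then Some [::] else None
  | v :: ls' =>
      if v \in L then
        let P := [set u in L | d u v < (2 ^+ eta.+1)^-1 * r] in
        omap (cons (P, v)) (greedy eta r (L :\: P) ls')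
      else None
  end.

Definition greedy_partition (eta : nat) (r : R) (L : {set V})
  (Q : seq ({set V} * V)) : Prop :=
  exists ls : seq V, greedy eta r L ls = Some Q.

Definition leaders (Sj : seq ({set V} * V)) : {set V} :=
  [set x | x \in map snd Sj].

Definition hier_step (eta : nat) (r : R) (Sj Sj1 : seq ({set V} * V)) : Prop :=
  exists Q, greedy_partition eta r (leaders Sj) Q /\
    Sj1 = [seq (\bigcup_(p <- Sj | p.2 \in q.1) p.1, q.2) | q : {set V} * V <- Q].

Definition radius (tau r0 : R) (j : nat) : R := tau ^+ j * r0.

(* S : levels S_0, ..., S_n of a (partial) run of the hierarchical
   construction, each level a list of (set, leader) pairs. *)
Definition hierarchy (eta : nat) (tau r0 : R)
  (S : nat -> seq ({set V} * V)) (n : nat) : Prop :=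
  S 0%N = [seq ([set v], v) | v <- enum V] /\
  forall j, (j < n)%N ->
    (1 < size (S j))%N /\ hier_step eta (2 * radius tau r0 j.+1) (S j) (S j.+1).

Definition knows (r : R) (S S' : {set V}) : Prop :=
  exists v u, v \in S /\ u \in S' /\ d v u < r.

End Defs.

(* Main.v *)
Require Import Defs.
From HB Require Import structures.
From mathcomp Require Import all_boot all_order all_algebra.
Import Order.TTheory GRing.Theory Num.Theory.
Local Open Scope ring_scope.

Lemma greedy_bound (R : realFieldType) (V : finType) (d : V -> V -> R) eta r
  (ls : seq V) : forall L Q, greedy d eta r L ls = Some Q ->
  forall q, q \in Q -> forall x, x \in q.1 -> d x q.2 < (2 ^+ eta.+1)^-1 * r.
Proof.
elim: ls => [|a ls IH] L Q /=.
  by case: ifP => // _ [<-].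
case: ifP => // aL.
case E: greedy => [Q'|] //= [<-] q; rewrite inE => /orP [/eqP -> | qQ'] x.
  by rewrite /= inE => /andP [_ h].
exact: (IH _ _ E).
Qed.

Lemma bigcup_seq_mem (T : finType) (I : eqType) (s : seq I) (P : pred I)
  (F : I -> {set T}) u :
  u \in \bigcup_(p <- s | P p) F p -> exists2 p, p \in s & P p && (u \in F p).
Proof.
elim: s => [|a s IH]; first by rewrite big_nil inE.
rewrite big_cons; case: ifP => Pa.
  rewrite inE => /orP [uF | /IH [p ps h]].
    by exists a; rewrite ?inE ?eqxx ?Pa.
  by exists p => //; rewrite inE ps orbT.
by move=> /IH [p ps h]; exists p => //; rewrite inE ps orbT.
Qed.

Fixpoint rho (R : realFieldType) (eta : nat) (tau r0 : R) (k : nat) : R :=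
  match k with
  | 0%N => 0
  | k'.+1 => rho R eta tau r0 k' + (2 ^+ eta.+1)^-1 * (2 * radius tau r0 k'.+1)
  end.
Arguments rho {R}.

Lemma hier_inv (R : realFieldType) (V : finType) (d : V -> V -> R) eta tau r0 S n :
  metric d -> hierarchy d eta tau r0 S n ->
  forall k, (k <= n)%N -> forall P l, (P, l) \in S k ->
  forall u, u \in P -> d u l <= rho eta tau r0 k.
Proof.
move=> [d0 d0iff dsym dtri] [S0 HS].
elim=> [|k IH] kn P l.
  rewrite S0 => /mapP [w _ [-> ->]] u; rewrite inE => /eqP ->.
  by rewrite /= (proj2 (d0iff w w) erefl).
have [_ [Q [[ls Hg] ->]]] := HS k kn.
case/mapP => q qQ [-> ->] u /bigcup_seq_mem [p pS /andP [pq up]].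
have := IH (ltnW kn) p.1 p.2; rewrite -surjective_pairing => /(_ pS u up) h1.
have h2 := @greedy_bound _ _ d _ _ _ _ _ Hg _ qQ _ pq.
apply: le_trans (dtri _ p.2 _) _.
by rewrite /= lerD // ltW.
Qed.
Lemma term_eq (R : realFieldType) eta (tau r0 : R) k :
  (2 ^+ eta.+1)^-1 * (2 * radius tau r0 k) = (2 ^+ eta)^-1 * r0 * tau ^+ k.
Proof.
have h2 : (2 : R) != 0 by rewrite pnatr_eq0.
rewrite /radius exprS invfM mulrCA !mulrA.
rewrite divff // mul1r.
by rewrite -mulrA [tau ^+ k * _]mulrC mulrA.
Qed.

Lemma rho_eq (R : realFieldType) eta (tau r0 : R) k :
  rho eta tau r0 k * (tau - 1) =
  (2 ^+ eta)^-1 * r0 * tau ^+ k.+1 - (2 ^+ eta)^-1 * r0 * tau.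
Proof.
set c := (2 ^+ eta)^-1 * r0.
have tq := @term_eq R eta tau r0; rewrite -/c in tq; clearbody c.
elim: k => [|k IH] /=; first by rewrite mul0r expr1 subrr.
rewrite tq mulrDl IH mulrBr mulr1 -mulrA.
rewrite -exprSr.
by rewrite addrC addrA subrK addrC.
Qed.
Lemma target_eq (R : realFieldType) eta (tau r0 : R) j :
  (1 + 4 * tau * (2 ^+ eta)^-1 / (tau - 1)) * tau * radius tau r0 j =
  radius tau r0 j.+1 + 4 * ((2 ^+ eta)^-1 * r0 * tau ^+ j.+2 / (tau - 1)).
Proof.
rewrite /radius !mulrDl !mul1r mulrA -exprS; congr (_ + _).
rewrite !exprS.
set e := (2 ^+ eta)^-1; set i := (tau - 1)^-1; set t := tau ^+ j.
rewrite -!mulrA.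
have -> : tau * (e * (i * (tau * (t * r0)))) = e * (r0 * (tau * (tau * (t * i)))).
  rewrite mulrCA; congr (e * _).
  rewrite [t * i]mulrC [tau * (i * t)]mulrCA [tau * (i * _)]mulrCA.
  rewrite [tau * (i * _)]mulrCA [r0 * _]mulrCA; congr (i * _).
  by rewrite [RHS]mulrC !mulrA.
by [].
Qed.

Theorem lemma6 (R : realFieldType) (V : finType) (d : V -> V -> R)
  (lam eta : nat) (tau r0 : R) (S : nat -> seq ({set V} * V)) (n j : nat)
  (v vs : V) (S1 S2 S1s S2s : {set V}) :
  metric d -> (2 <= #|V|)%N -> doubling d lam ->
  (2 <= eta)%N ->
  1 + (2 ^+ eta.-1 - 1)^-1 <= tau -> tau <= 2 ^+ eta ->
  0 < r0 -> (forall x y : V, x != y -> r0 < d x y) ->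
  hierarchy d eta tau r0 S n -> (j < n)%N ->
  v != vs ->
  S1 \in map fst (S j) -> v \in S1 ->
  S2 \in map fst (S j.+1) -> v \in S2 ->
  S1s \in map fst (S j) -> vs \in S1s ->
  S2s \in map fst (S j.+1) -> vs \in S2s ->
  knows d (radius tau r0 j.+1) S2 S2s ->
  ~ knows d (radius tau r0 j) S1 S1s ->
  (radius tau r0 j <= d v vs /\
   d v vs < (1 + 4 * tau * (2 ^+ eta)^-1 / (tau - 1)) * tau * radius tau r0 j) /\
  (tau = 2 -> eta = 2%N -> d v vs <= 6 * radius tau r0 j).
Proof.
move=> Hm _ _ eta2 Htau _ r0p _ Hh jn _ _ vS1 S2in vS2 _ vsS1s S2sin vsS2s
  [a [b [aS2 [bS2s dab]]]] Hnk.
have Hm' := Hm; case: Hm' => [d0 d0iff dsym dtri].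
have lb : radius tau r0 j <= d v vs.
  rewrite leNgt; apply/negP => h; apply: Hnk; exists v, vs; split => //.
have tau1 : 1 < tau.
  apply: lt_le_trans Htau; rewrite ltrDl invr_gt0 subr_gt0.
  by rewrite exprn_egt1 ?ltr1n //; move: eta2; case: (eta) => [|[|e]].
case/mapP: S2in => [[P2 l2] P2in /= E2]; subst P2.
case/mapP: S2sin => [[P2s l2s] P2sin /= E2s]; subst P2s.
have inv := @hier_inv R V d eta tau r0 S n Hm Hh j.+1 jn.
set rh := rho eta tau r0 j.+1 in inv.
have h1 := inv _ _ P2in _ vS2.
have h2 := inv _ _ P2in _ aS2.
have h3 := inv _ _ P2sin _ bS2s.
have h4 := inv _ _ P2sin _ vsS2s.
have ub : d v vs < rh + rh + radius tau r0 j.+1 + (rh + rh).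
  apply: (le_lt_trans (dtri _ a _)).
  rewrite -addrA; apply: ler_ltD.
    by apply: le_trans (dtri _ l2 _) _; rewrite dsym in h2; rewrite lerD.
  apply: (le_lt_trans (dtri _ b _)); apply: ltr_leD => //.
  by apply: le_trans (dtri _ l2s _) _; rewrite [d l2s vs]dsym lerD.
have rhb : rh <= (2 ^+ eta)^-1 * r0 * tau ^+ j.+2 / (tau - 1).
  rewrite ler_pdivlMr ?subr_gt0 // /rh rho_eq gerBl.
  by rewrite !mulr_ge0 ?invr_ge0 ?exprn_ge0 ?ltW // (lt_trans ltr01).
have mainb : d v vs < (1 + 4 * tau * (2 ^+ eta)^-1 / (tau - 1)) * tau * radius tau r0 j.
  rewrite target_eq; apply: lt_le_trans ub _.
  rewrite -addrA addrCA; apply: lerD => //.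
  have e4 : forall x : R, 4 * x = x + x + (x + x).
    by move=> x; rewrite mulr_natl !mulrSr mulr0n add0r addrA.
  by rewrite e4 !lerD.
split; first by split.
move=> t2 e2; subst eta; rewrite t2 in mainb.
apply: ltW; apply: lt_le_trans mainb _.
rewrite (_ : (1 + 4 * 2 * (2 ^+ 2)^-1 / (2 - 1)) * 2 = 6 :> R) ?t2 //.
have -> : (2 : R) ^+ 2 = 4 by rewrite expr2 -natrM.
have -> : (2 : R) - 1 = 1 by rewrite -(natrB R (isT : (1 <= 2)%N)).
have h4' : (4 : R) != 0 by rewrite pnatr_eq0.
rewrite invr1 mulr1 mulrAC divff // mul1r.
by rewrite mulrDl mul1r -natrM -natrD.
Qed.
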